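(* Let $H=(V,E)$ be a hypergraph such that the digraph $\mathcal D_3(H)$ has a non-trivial spanning arborescence. Then $H$ is eulerian.
   Context: A hypergraph $H=(V,E)$ consists of a finite nonempty vertex set $V$, a finite edge set $E$ disjoint from $V$, and an incidence function assigning to each edge $e\in E$ a subset of $V$ (also denoted $e$); distinct edges may have the same vertex set. Hypergraphs are assumed to have no empty edges. A walk is a sequence $W=v_0e_1v_1e_2\cdots e_kv_k$ with $v_i\in V$, $e_i\in E$, such that for each $i$, $v_{i-1}\ne v_i$ and $v_{i-1},v_i\in e_i$. $W$ is closed if $k\ge 2$ and $v_0=v_k$; it is a strict trail if $e_1,\dots,e_k$ are pairwise distinct. An Euler tour of $H$ is a closed strict trail traversing every edge of $H$; $H$ is eulerian if it has one. $\mathcal D_3(H)$ is the digraph with vertex set $E$ and arc set $\{(e,f): e,f\in E,\ |f\setminus e|=1,\ |e\cap f|\ge 3\}$. An arborescence is a digraph whose underlying undirected graph is a tree and whose arcs are all directed towards a root; it is non-trivial if it has at least two vertices. *)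

(* Defs.v *)
From mathcomp Require Import all_boot.
Set Implicit Arguments. Unset Strict Implicit. Unset Printing Implicit Defensive.

(* A hypergraph H = (V, E) is given by finite types V (vertices) and E (edges)
   together with an incidence function inc : E -> {set V}. Distinct edges may
   have the same vertex set. *)
Definition hypergraph_ok (V E : finType) (inc : E -> {set V}) : Prop :=
  0 < #|V| /\ (forall e : E, inc e != set0).

(* A walk v0 e1 v1 ... ek vk is represented by its start vertex v0 and the
   sequence [:: (e1,v1); ...; (ek,vk)]. *)
Fixpoint walk_from (V E : finType) (inc : E -> {set V}) (v : V)
    (s : seq (E * V)) : bool :=
  match s with
  | [::] => true
  | (e, w) :: s' => [&& v != w, v \in inc e, w \in inc e & walk_from inc w s']
  end.

Definition closed_walk (V E : finType) (inc : E -> {set V}) (v0 : V)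
    (s : seq (E * V)) : bool :=
  walk_from inc v0 s && (2 <= size s) && (last v0 (map snd s) == v0).

Definition strict_trail (V E : finType) (inc : E -> {set V}) (v0 : V)
    (s : seq (E * V)) : bool :=
  walk_from inc v0 s && uniq (map fst s).

Definition euler_tour (V E : finType) (inc : E -> {set V}) (v0 : V)
    (s : seq (E * V)) : bool :=
  [&& closed_walk inc v0 s, strict_trail inc v0 s &
      all (fun e => e \in map fst s) (enum E)].

Definition eulerian (V E : finType) (inc : E -> {set V}) : Prop :=
  exists (v0 : V) (s : seq (E * V)), euler_tour inc v0 s.

Definition D3 (V E : finType) (inc : E -> {set V}) : rel E :=
  fun e f => (#|inc f :\: inc e| == 1) && (3 <= #|inc e :&: inc f|).

Definition spanning_arborescence (T : finType) (D : rel T) (A : rel T) (r : T)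
  : Prop :=
  [/\ (forall x y, A x y -> D x y),
      (forall y, ~~ A r y),
      (forall x, x != r -> #|[set y | A x y]| = 1) &
      (forall x, connect A x r)].

Definition has_nontrivial_spanning_arborescence (T : finType) (D : rel T)
  : Prop :=
  2 <= #|T| /\ exists (A : rel T) (r : T), spanning_arborescence D A r.

(* Main.v *)
Require Import Defs.
From mathcomp Require Import all_boot.
From mathcomp Require Import zify.

Lemma avoid2 (V : finType) (A : {set V}) (v w : V) :
  3 <= #|A| -> exists x, [/\ x \in A, x != v & x != w].
Proof.
move=> HA.
have : ~~ (A \subset [set v; w]).
  apply/negP => /subset_leq_card; rewrite cards2.
  case: (v != w) => /=; lia.
case/subsetPn => x xA; rewrite !inE negb_or => /andP[xv xw].
by exists x.
Qed.

Lemma insert_edge (V E : finType) (inc : E -> {set V}) e f :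
  D3 inc e f -> forall T v, walk_from inc v T -> f \in map fst T ->
  exists T', [/\ walk_from inc v T',
                 last v (map snd T') = last v (map snd T) &
                 perm_eq (map fst T') (e :: map fst T)].
Proof.
move=> /andP[H1 H3]; elim=> [|[g w] T IH] v //=.
move=> /and4P[vw vg wg wT]; rewrite in_cons => /orP[/eqP gf | fT].
- subst g.
  have [x [xA xv xw]] := @avoid2 _ _ v w H3.
  move: xA; rewrite inE => /andP[xe xf].
  case: (boolP (w \in inc e)) => we.
  + exists [:: (f, x), (e, w) & T]; split => //=.
    * by rewrite eq_sym xv vg xf xw xe we wT.
    * by apply/permP => p /=; rewrite addnCA.
  + have ve : v \in inc e.
      apply/negPn/negP => ve.
      have /cards1P[a Ha] := H1.
      have : v \in inc f :\: inc e by rewrite inE ve vg.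
      have : w \in inc f :\: inc e by rewrite inE we wg.
      rewrite Ha !inE => /eqP wa /eqP va; by rewrite wa va eqxx in vw.
    exists [:: (e, x), (f, w) & T]; split => //=.
    by rewrite eq_sym xv ve xe xw xf wg wT.
- have [T'' [wT'' lT'' pT'']] := IH w wT fT.
  exists ((g, w) :: T''); split => //=.
  + by rewrite vw vg wg wT''.
  + apply/permP => p /=; move/permP: pT'' => /(_ p) /= ->; by rewrite addnCA.
Qed.

Lemma crossing (E : finType) (A : rel E) (S : pred E) :
  forall p x, path A x p -> last x p \in S -> x \notin S ->
  exists a b, [/\ a \notin S, b \in S & A a b].
Proof.
elim=> [|y p IH] x /=; first by move=> _ ->.
move=> /andP[Axy Hp] Hl xS.
case: (boolP (y \in S)) => yS; first by exists x, y.
exact: IH Hp Hl yS.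
Qed.

Lemma extend (V E : finType) (inc : E -> {set V}) (A : rel E) (r : E) :
  spanning_arborescence (D3 inc) A r ->
  forall n v0 T, closed_walk inc v0 T -> strict_trail inc v0 T ->
  r \in map fst T -> #|E| - size T <= n -> eulerian inc.
Proof.
case=> AD _ _ Hc; elim=> [|n IH] v0 T Hcl Hst Hr Hn.
- exists v0, T; rewrite /euler_tour Hcl Hst /=.
  apply/allP => e _; apply/negPn/negP => eT.
  move: Hst => /andP[_ Hu].
  have := card_uniqP Hu; rewrite size_map => Hs.
  have : #|[predU1 e & map fst T]| <= #|E| by apply: max_card.
  rewrite cardU1 eT Hs /= => H; move: Hn; rewrite leqn0 subn_eq0 => Hn2.
  by have := leq_trans H Hn2; rewrite add1n ltnn.
- case: (boolP (all (fun e => e \in map fst T) (enum E))) => Hall.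
    by exists v0, T; rewrite /euler_tour Hcl Hst Hall.
  case/allPn: Hall => e _ eT.
  have [p Hp Hl] := connectP (Hc e).
  have [a [b [aT bT Aab]]] :=
    @crossing _ A (fun x => x \in map fst T) _ _ Hp ltac:(by rewrite -Hl) eT.
  move: Hcl Hst => /andP[/andP[Hw Hsz] Hlast] /andP[_ Hu].
  have [T' [Hw' Hl' Hp']] := @insert_edge _ _ inc a b (AD _ _ Aab) _ _ Hw bT.
  have Hsz' : size T' = (size T).+1.
    by rewrite -(size_map fst T') (perm_size Hp') /= size_map.
  apply: (IH v0 T').
  + by rewrite /closed_walk Hw' Hsz' Hl' Hlast (leq_trans Hsz).
  + by rewrite /strict_trail Hw' (perm_uniq Hp') /= aT Hu.
  + by rewrite (perm_mem Hp') in_cons Hr orbT.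
  + rewrite Hsz'; lia.
Qed.

Theorem corollary2p10 (V E : finType) (inc : E -> {set V}) :
  hypergraph_ok inc ->
  has_nontrivial_spanning_arborescence (D3 inc) ->
  eulerian inc.
Proof.
move=> _ [H2 [A [r Harb]]].
have Harb' := Harb; case: Harb' => AD _ _ Hc.
have : [set~ r] != set0.
  by rewrite -card_gt0 cardsC1; lia.
case/set0Pn => x; rewrite !inE => xr.
have [p Hp Hl] := connectP (Hc x).
have [a [b [aS bS Aab]]] :=
  @crossing _ A (pred1 r) _ _ Hp ltac:(by rewrite -Hl inE) ltac:(by rewrite inE xr).
move: bS => /= /eqP bS; subst b.
move: (AD _ _ Aab) => /andP[_ H3].
have : 0 < #|inc a :&: inc r| by lia.
rewrite card_gt0 => /set0Pn[a1 Ha1].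
have [y [Hy ya1 _]] := @avoid2 _ _ a1 a1 H3.
move: Ha1 Hy; rewrite !inE => /andP[a1a a1r] /andP[ya yr].
apply: (@extend _ _ inc A r Harb #|E| a1 [:: (a, y); (r, a1)]).
- by rewrite /closed_walk /= eq_sym ya1 a1a ya yr a1r eqxx.
- rewrite /strict_trail /= eq_sym ya1 a1a ya yr a1r /= !inE andbT.
  by move: aS; rewrite inE.
- by rewrite /= !inE eqxx orbT.
- lia.
Qed.
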